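(* Let $\theta_1$ be an irrational number, $\theta_0,\theta_2,\ldots,\theta_n$ real numbers, and $m\ge2$ an integer. Then the array $\big(\lfloor v_1\theta_1+v_2\theta_2+\cdots+v_n\theta_n+\theta_0\rfloor\big)_{\mathbf{v}\in\mathbb{N}^n}$ is uniformly distributed mod $m$.
   Context: An array $(S(\mathbf{v}))_{\mathbf{v}\in\mathbb{N}^n}$ of integers is uniformly distributed mod $m$ if for each $j\in\{0,\ldots,m-1\}$, $\#\{\mathbf{v}:1\le v_i\le V_i\ \forall i,\ S(\mathbf{v})\equiv j\pmod m\}/(V_1\cdots V_n)\to 1/m$ as $V_1,\ldots,V_n\to\infty$. *)

(* Defs.v *)
From Stdlib Require Import Reals Lra Lia ZArith List.
Open Scope R_scope.

(* All vectors v = (v_1,...,v_n) with 1 <= v_i <= V i (i = 1..n),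
   represented as lists [v_1; ...; v_n]. *)
Fixpoint box (n : nat) (V : nat -> nat) : list (list nat) :=
  match n with
  | O => nil :: nil
  | S k => flat_map (fun w => map (fun x => w ++ (x :: nil)) (seq 1 (V (S k))))
                    (box k V)
  end.

Definition count_res (S : list nat -> Z) (m : Z) (j : Z) (n : nat) (V : nat -> nat) : nat :=
  length (filter (fun v => Z.eqb (Z.modulo (S v) m) j) (box n V)).

Definition unif_distr_mod (n : nat) (S : list nat -> Z) (m : Z) : Prop :=
  forall j : Z, (0 <= j < m)%Z ->
    forall eps : R, eps > 0 -> exists N : nat,
      forall V : nat -> nat, (forall i, (1 <= i <= n)%nat -> (N <= V i)%nat) ->
        Rabs (INR (count_res S m j n V) / INR (fold_right Nat.mul 1%nat (map V (seq 1 n)))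
              - 1 / IZR m) < eps.

Fixpoint lin_comb (theta : nat -> R) (i : nat) (v : list nat) : R :=
  match v with
  | nil => 0
  | x :: v' => INR x * theta i + lin_comb theta (S i) v'
  end.

Definition floor_array (theta : nat -> R) (v : list nat) : Z :=
  Int_part (lin_comb theta 1 v + theta O).

Definition irrational (x : R) : Prop := forall p q : Z, q <> 0%Z -> x <> IZR p / IZR q.

(* Main.v *)
Require Import Defs.
From Stdlib Require Import Reals Lra Lia ZArith List Classical.
Open Scope R_scope.

Lemma fl_spec y : IZR (Int_part y) <= y < IZR (Int_part y) + 1.
Proof. destruct (base_Int_part y). lra. Qed.

Lemma fl_unique y z : IZR z <= y < IZR z + 1 -> Int_part y = z.
Proof.
  intros H. pose proof (fl_spec y).
  assert (H1 : (z < Int_part y + 1)%Z) by (apply lt_IZR; rewrite plus_IZR; simpl; lra).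
  assert (H2 : (Int_part y < z + 1)%Z) by (apply lt_IZR; rewrite plus_IZR; simpl; lra).
  lia.
Qed.

Lemma fr_unique y z : IZR z <= y < IZR z + 1 -> frac_part y = y - IZR z.
Proof. intros H; unfold frac_part; rewrite (fl_unique y z H); reflexivity. Qed.

Lemma fr_range y : 0 <= frac_part y < 1.
Proof. unfold frac_part; pose proof (fl_spec y); lra. Qed.

Lemma fr_shift y k : frac_part (y + IZR k) = frac_part y.
Proof.
  rewrite (fr_unique _ (Int_part y + k)).
  - unfold frac_part; rewrite plus_IZR; ring.
  - pose proof (fl_spec y); rewrite plus_IZR; lra.
Qed.

Fixpoint sum0 (f : nat -> R) (n : nat) : R :=
  match n with O => 0 | S k => sum0 f k + f k end.

Lemma sum0_ext f g n : (forall i, (i < n)%nat -> f i = g i) -> sum0 f n = sum0 g n.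
Proof. induction n; simpl; intros H; auto. rewrite IHn, H; auto. Qed.

Lemma sum0_le f g n : (forall i, (i < n)%nat -> f i <= g i) -> sum0 f n <= sum0 g n.
Proof. induction n; simpl; intros H. lra. pose proof (H n ltac:(lia)). pose proof (IHn ltac:(intros; apply H; lia)). lra. Qed.

Lemma sum0_add f g n : sum0 (fun i => f i + g i) n = sum0 f n + sum0 g n.
Proof. induction n; simpl. ring. rewrite IHn; ring. Qed.

Lemma sum0_opp f n : sum0 (fun i => - f i) n = - sum0 f n.
Proof. induction n; simpl. ring. rewrite IHn; ring. Qed.

Lemma sum0_const c n : sum0 (fun _ => c) n = INR n * c.
Proof. induction n; simpl sum0. simpl; ring. rewrite IHn, S_INR; ring. Qed.

Lemma sum0_swap f a b : sum0 (fun i => sum0 (fun j => f i j) b) a = sum0 (fun j => sum0 (fun i => f i j) a) b.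
Proof.
  induction a; simpl.
  - induction b; simpl; [reflexivity| rewrite <- IHb; ring].
  - rewrite IHa, <- sum0_add. reflexivity.
Qed.

Lemma sum0_split f a b : sum0 f (a + b) = sum0 f a + sum0 (fun i => f (a + i)%nat) b.
Proof. induction b; simpl. rewrite Nat.add_0_r; ring. rewrite Nat.add_succ_r; simpl. rewrite IHb; ring. Qed.

Lemma sum0_nonneg f n : (forall i, (i < n)%nat -> 0 <= f i) -> 0 <= sum0 f n.
Proof. intros H; rewrite <- (Rmult_0_r (INR n)), <- sum0_const; apply sum0_le; auto. Qed.

Lemma sum0_ge_term f n j : (forall i, (i < n)%nat -> 0 <= f i) -> (j < n)%nat -> f j <= sum0 f n.
Proof.
  induction n; simpl; intros H Hj. lia.
  assert (0 <= sum0 f n) by (apply sum0_nonneg; intros; apply H; lia).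
  destruct (Nat.eq_dec j n). subst; lra.
  pose proof (H n ltac:(lia)). pose proof (IHn ltac:(intros; apply H; lia) ltac:(lia)). lra.
Qed.

Lemma sum0_shift g n p : (forall i, 0 <= g i <= 1) ->
  sum0 (fun i => g (p + i)%nat) n >= sum0 g n - INR p.
Proof.
  intros H.
  pose proof (sum0_split g p n) as E1. pose proof (sum0_split g n p) as E2.
  rewrite Nat.add_comm in E2. rewrite E2 in E1.
  assert (0 <= sum0 (fun i => g (n + i)%nat) p) by (apply sum0_nonneg; intros; apply H).
  assert (sum0 g p <= INR p) by (rewrite <- (Rmult_1_r (INR p)), <- sum0_const; apply sum0_le; intros; apply H).
  lra.
Qed.

Definition ilt (a b : R) : R := if Rlt_dec a b then 1 else 0.
Definition iin (a x b : R) : R := if Rle_dec a x then ilt x b else 0.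

Lemma ilt_range a b : 0 <= ilt a b <= 1.
Proof. unfold ilt; destruct Rlt_dec; lra. Qed.
Lemma iin_range a x b : 0 <= iin a x b <= 1.
Proof. unfold iin, ilt; destruct Rle_dec; try destruct Rlt_dec; lra. Qed.

Lemma sum_bins tau x Rn : 0 < tau -> 0 <= x ->
  sum0 (fun r => iin (INR r * tau) x (INR (S r) * tau)) Rn = ilt x (INR Rn * tau).
Proof.
  intros Ht Hx. induction Rn; cbn [sum0].
  - unfold ilt; simpl; destruct Rlt_dec; lra.
  - rewrite IHRn. unfold iin, ilt. rewrite !S_INR.
    destruct (Rlt_dec x (INR Rn * tau)), (Rle_dec (INR Rn * tau) x), (Rlt_dec x ((INR Rn + 1) * tau)); try lra;
    try (destruct (Rlt_dec x ((INR Rn + 1) * tau))); nra.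
Qed.

Lemma frac_sub_lt y r tau : 0 < tau -> INR (S r) * tau <= 1 ->
  ilt (frac_part (y - INR r * tau)) tau = iin (INR r * tau) (frac_part y) (INR (S r) * tau).
Proof.
  intros Ht Hr. rewrite S_INR in *.
  assert (0 <= INR r) by apply pos_INR.
  pose proof (fl_spec y) as Hy. set (k := Int_part y) in *.
  assert (Hf : frac_part y = y - IZR k) by reflexivity.
  unfold iin, ilt. rewrite Hf.
  destruct (Rle_dec (INR r * tau) (y - IZR k)).
  - rewrite (fr_unique _ k) by nra.
    destruct (Rlt_dec (y - INR r * tau - IZR k) tau), (Rlt_dec (y - IZR k) ((INR r + 1) * tau)); nra.
  - rewrite (fr_unique _ (k - 1)) by (rewrite minus_IZR; simpl; nra).
    rewrite minus_IZR; simpl. destruct Rlt_dec; nra.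
Qed.

Lemma sum_frac_bins y Rn tau : 0 < tau -> INR Rn * tau <= 1 ->
  sum0 (fun r => ilt (frac_part (y - INR r * tau)) tau) Rn = ilt (frac_part y) (INR Rn * tau).
Proof.
  intros Ht HR. rewrite <- sum_bins by (auto; apply fr_range).
  apply sum0_ext; intros r Hr. apply frac_sub_lt; auto.
  apply Rle_trans with (INR Rn * tau); auto. apply Rmult_le_compat_r; [lra|]. apply le_INR; lia.
Qed.

Lemma iin_split a x b : a <= b -> iin a x b = ilt x b - ilt x a.
Proof. intros. unfold iin, ilt; destruct (Rle_dec a x), (Rlt_dec x b), (Rlt_dec x a); lra. Qed.

Lemma partition_m y m w : 0 < w -> INR m * w = 1 ->
  sum0 (fun j => ilt (frac_part (y - INR j * w)) w) m = 1.
Proof.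
  intros Hw Hm. rewrite sum_frac_bins by lra. rewrite Hm. unfold ilt.
  destruct Rlt_dec; auto. pose proof (fr_range y); lra.
Qed.

Lemma stepB_pt y m w Rn sig : 0 < sig -> sig <= w -> 0 < w -> w <= 1 -> INR m * w = 1 -> INR Rn * sig <= w ->
  sum0 (fun j => sum0 (fun r => iin sig (frac_part (y - INR j * w - INR r * sig)) w) Rn) m >= INR Rn - 1.
Proof.
  intros Hs Hsw Hw Hw1 Hm HR.
  rewrite (sum0_ext _ (fun j => sum0 (fun r => ilt (frac_part (y - INR j * w - INR r * sig)) w) Rn
                      + - sum0 (fun r => ilt (frac_part (y - INR j * w - INR r * sig)) sig) Rn)).
  2:{ intros j _. rewrite <- sum0_opp, <- sum0_add. apply sum0_ext. intros r _. rewrite iin_split by lra. ring. }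
  rewrite sum0_add, sum0_opp, sum0_swap.
  rewrite (sum0_ext _ (fun _ => 1) Rn).
  2:{ intros r _. rewrite <- (partition_m (y - INR r * sig) m w) by auto. apply sum0_ext. intros j _.
      f_equal; f_equal; ring. }
  rewrite sum0_const.
  rewrite (sum0_ext _ (fun j => ilt (frac_part (y - INR j * w)) (INR Rn * sig)) m).
  2:{ intros j _. apply sum_frac_bins; lra. }
  assert (sum0 (fun j => ilt (frac_part (y - INR j * w)) (INR Rn * sig)) m <= 1).
  { rewrite <- (partition_m y m w) by auto. apply sum0_le. intros j _. unfold ilt.
    destruct Rlt_dec, Rlt_dec; lra. }
  lra.
Qed.

Lemma php K (f : nat -> nat) : (forall i, (i <= K)%nat -> (f i < K)%nat) ->
  exists i j, (i < j <= K)%nat /\ f i = f j.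
Proof.
  revert f; induction K; intros f H.
  - specialize (H 0%nat ltac:(lia)); lia.
  - destruct (classic (exists i, (i <= K)%nat /\ f i = f (S K))) as [[i [Hi E]]|Hn].
    + exists i, (S K); split; [lia|auto].
    + set (g := fun i => if (f i <? f (S K))%nat then f i else (f i - 1)%nat).
      destruct (IHK g) as [i [j [Hij E]]].
      * intros i Hi. unfold g. pose proof (H i ltac:(lia)). pose proof (H (S K) ltac:(lia)).
        assert (f i <> f (S K)) by (intro; apply Hn; exists i; auto).
        destruct (Nat.ltb_spec (f i) (f (S K))); lia.
      * exists i, j; split; [lia|]. unfold g in E.
        assert (f i <> f (S K)) by (intro; apply Hn; exists i; split; auto; lia).
        assert (f j <> f (S K)) by (intro; apply Hn; exists j; split; auto; lia).
        destruct (Nat.ltb_spec (f i) (f (S K))), (Nat.ltb_spec (f j) (f (S K))); lia.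
Qed.

Lemma INR_Z2N z : (0 <= z)%Z -> INR (Z.to_nat z) = IZR z.
Proof. intros. rewrite INR_IZR_INZ, Z2Nat.id; auto. Qed.

Lemma fl_nonneg x : 0 <= x -> (0 <= Int_part x)%Z.
Proof. intros. pose proof (fl_spec x). assert (-1 < IZR (Int_part x)) by lra.
  apply lt_IZR in H1. lia. Qed.

Lemma approx beta K : (1 <= K)%nat ->
  (forall q : nat, (1 <= q)%nat -> forall P : Z, INR q * beta <> IZR P) ->
  exists q sig P e, (1 <= q)%nat /\ 0 < sig < 1 / INR K /\ (e = sig \/ e = - sig) /\
    INR q * beta = IZR P + e.
Proof.
  intros HK Hirr.
  assert (HK' : 1 <= INR K) by (apply (le_INR 1); auto).
  set (f := fun i => Z.to_nat (Int_part (INR K * frac_part (INR i * beta)))).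
  destruct (php K f) as [i [j [Hij E]]].
  { intros i _. unfold f. pose proof (fr_range (INR i * beta)).
    assert (H0 : (0 <= Int_part (INR K * frac_part (INR i * beta)))%Z) by (apply fl_nonneg; nra).
    pose proof (fl_spec (INR K * frac_part (INR i * beta))).
    assert (Int_part (INR K * frac_part (INR i * beta)) < Z.of_nat K)%Z.
    { apply lt_IZR. rewrite <- INR_IZR_INZ. nra. }
    lia. }
  unfold f in E.
  pose proof (fr_range (INR i * beta)) as Fi. pose proof (fr_range (INR j * beta)) as Fj.
  assert (E' : Int_part (INR K * frac_part (INR i * beta)) = Int_part (INR K * frac_part (INR j * beta))).
  { assert (0 <= INR K * frac_part (INR i * beta)) by nra.
    assert (0 <= INR K * frac_part (INR j * beta)) by nra.
    apply fl_nonneg in H. apply fl_nonneg in H0. lia. }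
  pose proof (fl_spec (INR K * frac_part (INR i * beta))).
  pose proof (fl_spec (INR K * frac_part (INR j * beta))).
  rewrite E' in H.
  set (D := frac_part (INR j * beta) - frac_part (INR i * beta)).
  assert (HKD : INR K * D = INR K * frac_part (INR j * beta) - INR K * frac_part (INR i * beta)) by (unfold D; ring).
  assert (HD1 : INR K * D < 1) by lra.
  assert (HD2 : INR K * (- D) < 1) by (replace (INR K * (- D)) with (- (INR K * D)) by ring; lra).
  assert (HKi : INR K * (1 / INR K) = 1) by (field; lra).
  assert (HDa : D < 1 / INR K) by (apply (Rmult_lt_reg_l (INR K)); lra).
  assert (HDb : - D < 1 / INR K) by (apply (Rmult_lt_reg_l (INR K)); lra).
  assert (Hq : INR (j - i) * beta = IZR (Int_part (INR j * beta) - Int_part (INR i * beta)) + D).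
  { rewrite minus_INR by lia. rewrite minus_IZR. unfold D, frac_part. ring. }
  assert (HD0 : D <> 0).
  { intro HD0. apply (Hirr (j - i)%nat ltac:(lia) (Int_part (INR j * beta) - Int_part (INR i * beta))%Z).
    rewrite Hq, HD0; ring. }
  destruct (Rlt_dec 0 D).
  - exists (j - i)%nat, D, (Int_part (INR j * beta) - Int_part (INR i * beta))%Z, D.
    repeat split; auto; lia.
  - exists (j - i)%nat, (- D), (Int_part (INR j * beta) - Int_part (INR i * beta))%Z, D.
    repeat split; auto; try lia; try lra.
Qed.

Lemma t_exists sig e g g' : 0 < sig -> (e = sig \/ e = - sig) ->
  exists t s k, 0 <= s <= sig /\ INR t <= 1 / sig + 1 /\ g + INR t * e = g' + s + IZR k.
Proof.
  intros Hs He.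
  assert (Hinv : forall x, 0 <= x < 1 -> 0 <= x / sig < 1 / sig /\ x = x / sig * sig).
  { intros x Hx. split; [split|].
    - apply Rmult_le_pos; [lra|]. left; apply Rinv_0_lt_compat; lra.
    - unfold Rdiv. apply Rmult_lt_compat_r; [apply Rinv_0_lt_compat; lra| lra].
    - field; lra. }
  destruct He as [He|He]; subst e.
  - set (D := g' - g). set (De := frac_part D).
    pose proof (fr_range D) as HDe. fold De in HDe.
    destruct (Hinv De HDe) as [[H1 H2] H3].
    set (z := Int_part (De / sig)). pose proof (fl_spec (De / sig)) as Hz. fold z in Hz.
    assert (z0 : (0 <= z)%Z) by (apply fl_nonneg; lra).
    exists (Z.to_nat (z + 1)), ((IZR z + 1) * sig - De), (- Int_part D)%Z.
    rewrite INR_Z2N by lia. rewrite plus_IZR, opp_IZR. simpl IZR.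
    assert (IZR z * sig <= De < IZR z * sig + sig) by nra.
    repeat split; try nra.
    unfold De, D, frac_part. ring.
  - set (D := g - g'). set (De := frac_part D).
    pose proof (fr_range D) as HDe. fold De in HDe.
    destruct (Hinv De HDe) as [[H1 H2] H3].
    set (z := Int_part (De / sig)). pose proof (fl_spec (De / sig)) as Hz. fold z in Hz.
    assert (z0 : (0 <= z)%Z) by (apply fl_nonneg; lra).
    exists (Z.to_nat z), (De - IZR z * sig), (Int_part D)%Z.
    rewrite INR_Z2N by lia.
    assert (IZR z * sig <= De < IZR z * sig + sig) by nra.
    repeat split; try nra.
    unfold De, D, frac_part. ring.
Qed.

Lemma P1 y s sig w : 0 <= s <= sig -> w <= 1 ->
  iin sig (frac_part (y + s)) w <= ilt (frac_part y) w.
Proof.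
  intros Hs Hw. unfold iin, ilt.
  destruct (Rle_dec sig (frac_part (y + s))); [|destruct Rlt_dec; lra].
  destruct (Rlt_dec (frac_part (y + s)) w); [|destruct Rlt_dec; lra].
  rewrite (fr_unique y (Int_part (y + s))).
  - destruct Rlt_dec as [|Hn]; [lra|]. exfalso; apply Hn. unfold frac_part in *; lra.
  - unfold frac_part in *; lra.
Qed.

Section Core.
Variables (beta w sig e : R) (q : nat) (P : Z).
Hypotheses (Hsig : 0 < sig) (Hsw : sig <= w) (Hw1 : w <= 1) (He : e = sig \/ e = - sig)
  (Hq : INR q * beta = IZR P + e).

Definition Afun g L := sum0 (fun i => ilt (frac_part (INR (S i) * beta + g)) w) L.
Definition Gfun g L := sum0 (fun i => iin sig (frac_part (INR (S i) * beta + g)) w) L.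

Lemma stepA g g' L : Afun g' L >= Gfun g L - INR q * (1 / sig + 1).
Proof.
  destruct (t_exists sig e g g' Hsig He) as [t [s [k [Hs [Ht Hk]]]]].
  set (p := (t * q)%nat).
  assert (Hsh := sum0_shift (fun i => iin sig (frac_part (INR (S i) * beta + g)) w) L p
                   (fun i => iin_range _ _ _)).
  assert (Hle : sum0 (fun i => iin sig (frac_part (INR (S (p + i)) * beta + g)) w) L <= Afun g' L).
  { unfold Afun. apply sum0_le. intros i _.
    replace (INR (S (p + i)) * beta + g) with (INR (S i) * beta + g' + s + IZR (k + Z.of_nat t * P)).
    - rewrite fr_shift. apply P1; auto.
    - rewrite plus_IZR, mult_IZR, <- INR_IZR_INZ.
      replace (INR (S (p + i))) with (INR p + INR (S i)) by (rewrite <- plus_INR; f_equal; lia).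
      unfold p. rewrite mult_INR.
      assert (INR t * INR q * beta = INR t * IZR P + INR t * e) by (rewrite Rmult_assoc, Hq; ring).
      lra. }
  assert (INR p <= INR q * (1 / sig + 1)).
  { unfold p. rewrite mult_INR. rewrite Rmult_comm. apply Rmult_le_compat_l; auto. apply pos_INR. }
  unfold Gfun. lra.
Qed.

End Core.

Section Core2.
Variables (beta w sig e : R) (q : nat) (P : Z) (m Rn : nat).
Hypotheses (Hsig : 0 < sig) (Hsw : sig <= w) (Hw1 : w <= 1) (Hw0 : 0 < w) (He : e = sig \/ e = - sig)
  (Hq : INR q * beta = IZR P + e) (Hm : INR m * w = 1) (HR : INR Rn * sig <= w).

Lemma stepB g0 L :
  sum0 (fun j => sum0 (fun r => Gfun beta w sig (g0 - INR j * w - INR r * sig) L) Rn) m >= (INR Rn - 1) * INR L.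
Proof.
  unfold Gfun.
  rewrite (sum0_ext _ (fun j => sum0 (fun i => sum0 (fun r =>
      iin sig (frac_part (INR (S i) * beta + (g0 - INR j * w - INR r * sig))) w) Rn) L) m).
  2:{ intros j _. apply sum0_swap. }
  rewrite sum0_swap.
  rewrite Rmult_comm, <- sum0_const. apply Rle_ge, sum0_le. intros i _.
  apply Rge_le.
  rewrite (sum0_ext _ (fun j => sum0 (fun r =>
      iin sig (frac_part (INR (S i) * beta + g0 - INR j * w - INR r * sig)) w) Rn) m).
  - apply stepB_pt; auto.
  - intros j _. apply sum0_ext. intros r _. f_equal. f_equal. ring.
Qed.

Lemma lowerA g' L :
  INR m * INR Rn * Afun beta w g' L >= (INR Rn - 1) * INR L - INR m * INR Rn * (INR q * (1 / sig + 1)).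
Proof.
  set (g := 0). pose proof (stepB g L) as H.
  assert (H2 : sum0 (fun j => sum0 (fun r => Gfun beta w sig (g - INR j * w - INR r * sig) L) Rn) m
              <= sum0 (fun j => sum0 (fun r => Afun beta w g' L + INR q * (1 / sig + 1)) Rn) m).
  { apply sum0_le; intros j _; apply sum0_le; intros r _.
    pose proof (stepA beta w sig e q P Hsig Hw1 He Hq (g - INR j * w - INR r * sig) g' L). lra. }
  assert (E3 : sum0 (fun j => sum0 (fun r => Afun beta w g' L + INR q * (1 / sig + 1)) Rn) m
     = INR m * (INR Rn * (Afun beta w g' L + INR q * (1 / sig + 1)))).
  { transitivity (sum0 (fun _ => INR Rn * (Afun beta w g' L + INR q * (1 / sig + 1))) m).
    - apply sum0_ext. intros; apply sum0_const.
    - apply sum0_const. }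
  rewrite E3 in H2. nra.
Qed.
End Core2.

Lemma exists_nat_gt x : exists n : nat, x < INR n.
Proof.
  destruct (archimed x) as [H1 _].
  destruct (Z_lt_le_dec (up x) 0).
  - exists 0%nat. simpl. apply IZR_lt in l. lra.
  - exists (Z.to_nat (up x)). rewrite INR_Z2N; auto.
Qed.

Theorem lower_bound beta w m : (1 <= m)%nat -> INR m * w = 1 ->
  (forall q : nat, (1 <= q)%nat -> forall P : Z, INR q * beta <> IZR P) ->
  forall eps, eps > 0 -> exists N, forall g L, (N <= L)%nat -> Afun beta w g L >= (w - eps) * INR L.
Proof.
  intros Hm1 Hm Hirr eps Heps.
  assert (Hmr : 1 <= INR m) by (apply (le_INR 1); auto).
  assert (Hw0 : 0 < w) by nra.
  assert (Hw1 : w <= 1) by nra.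
  destruct (exists_nat_gt (2 * w / eps)) as [Rn HRn].
  assert (H2w : 0 < 2 * w / eps) by (apply Rdiv_lt_0_compat; lra).
  assert (HRn1 : (1 <= Rn)%nat) by (destruct Rn; simpl in HRn; lra || lia).
  assert (HRr : 1 <= INR Rn) by (apply (le_INR 1); auto).
  destruct (approx beta (m * Rn) ltac:(lia) Hirr) as [q [sig [P [e [Hq1 [Hs [He Hq]]]]]]].
  rewrite mult_INR in Hs.
  assert (HRs : INR Rn * sig <= w).
  { assert (INR m * (INR Rn * sig) < 1).
    { replace 1 with ((INR m * INR Rn) * (1 / (INR m * INR Rn))) by (field; lra). rewrite <- Rmult_assoc. apply Rmult_lt_compat_l; [nra|lra]. }
    nra. }
  assert (Hsw : sig <= w) by nra.
  set (C := INR q * (1 / sig + 1)).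
  destruct (exists_nat_gt (2 * C / eps)) as [N HN].
  exists N. intros g L HL.
  assert (HLr : INR N <= INR L) by (apply le_INR; auto).
  pose proof (lowerA beta w sig e q P m Rn (proj1 Hs) Hsw Hw1 Hw0 He Hq Hm HRs g L) as H.
  fold C in H.
  assert (HC : C <= eps * INR L / 2).
  { assert (2 * C / eps * eps = 2 * C) by (field; lra). nra. }
  assert (HRe : 2 * w < INR Rn * eps).
  { assert (2 * w / eps * eps = 2 * w) by (field; lra). nra. }
  assert (HL0 : 0 <= INR L) by apply pos_INR.
  assert (HMR : 0 < INR m * INR Rn) by nra.
  apply Rle_ge. apply (Rmult_le_reg_l (INR m * INR Rn)); auto.
  assert (INR m * INR Rn * ((w - eps) * INR L) = INR Rn * INR L - INR m * INR Rn * eps * INR L).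
  { replace (INR m * INR Rn * ((w - eps) * INR L)) with (INR Rn * INR L * (INR m * w) - INR m * INR Rn * eps * INR L) by ring.
    rewrite Hm; ring. }
  assert (INR m * (INR Rn * eps) * INR L >= INR m * (2 * w) * INR L) by (apply Rle_ge, Rmult_le_compat_r; [lra|]; apply Rmult_le_compat_l; lra).
  assert (INR m * (2 * w) * INR L = 2 * INR L) by (replace (INR m * (2 * w) * INR L) with (2 * INR L * (INR m * w)) by ring; rewrite Hm; ring).
  assert (INR m * INR Rn * C <= INR m * INR Rn * (eps * INR L / 2)) by (apply Rmult_le_compat_l; lra).
  nra.
Qed.

Lemma mod_shift (a j M : Z) : (0 < M)%Z -> (0 <= j < M)%Z -> (((a - j) mod M = 0)%Z <-> (a mod M = j)%Z).
Proof.
  intros HM Hj. split; intros H.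
  - pose proof (Z.div_mod (a - j) M ltac:(lia)) as E. rewrite H in E.
    symmetry; apply (Z.mod_unique a M ((a - j) / M) j); lia.
  - symmetry; apply (Z.mod_unique (a - j) M (a / M) 0); try lia.
    pose proof (Z.div_mod a M ltac:(lia)). lia.
Qed.

Lemma fl_shiftZ y k : Int_part (y + IZR k) = (Int_part y + k)%Z.
Proof. apply fl_unique. rewrite plus_IZR. pose proof (fl_spec y). lra. Qed.

Lemma floor_mod0 z (mn : nat) : (1 <= mn)%nat ->
  ((Int_part z mod Z.of_nat mn = 0)%Z <-> frac_part (z / INR mn) < 1 / INR mn).
Proof.
  intros Hm. assert (Hmr : 1 <= INR mn) by (apply (le_INR 1); auto).
  set (K := Int_part (z / INR mn)). set (f := frac_part (z / INR mn)).
  pose proof (fr_range (z / INR mn)) as Hf. fold f in Hf.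
  assert (Ez : z = INR mn * IZR K + INR mn * f) by (unfold f, frac_part; fold K; field; lra).
  set (r := Int_part (INR mn * f)).
  pose proof (fl_spec (INR mn * f)) as Hr. fold r in Hr.
  assert (r0 : (0 <= r)%Z) by (apply fl_nonneg; nra).
  assert (r1 : (r < Z.of_nat mn)%Z) by (apply lt_IZR; rewrite <- INR_IZR_INZ; nra).
  assert (Iz : Int_part z = (Z.of_nat mn * K + r)%Z).
  { apply fl_unique. rewrite plus_IZR, mult_IZR, <- INR_IZR_INZ. lra. }
  rewrite Iz.
  replace ((Z.of_nat mn * K + r) mod Z.of_nat mn)%Z with r.
  2:{ apply (Z.mod_unique _ _ K r); lia. }
  assert (HH : f < 1 / INR mn <-> INR mn * f < 1).
  { split; intros.
    - replace 1 with (INR mn * (1 / INR mn)) by (field; lra). apply Rmult_lt_compat_l; lra.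
    - apply (Rmult_lt_reg_l (INR mn)); [lra|]. replace (INR mn * (1 / INR mn)) with 1 by (field; lra). lra. }
  rewrite HH. split; intros H.
  - rewrite H in Hr. simpl in Hr. lra.
  - assert (IZR r < 1) by lra. apply lt_IZR in H0. lia.
Qed.

Fixpoint sumL {A} (f : A -> R) (l : list A) : R :=
  match l with nil => 0 | a :: l' => f a + sumL f l' end.

Lemma sumL_app {A} (f : A -> R) l1 l2 : sumL f (l1 ++ l2) = sumL f l1 + sumL f l2.
Proof. induction l1; simpl. ring. rewrite IHl1; ring. Qed.

Lemma sumL_seq f a n : sumL f (seq a n) = sum0 (fun i => f (a + i)%nat) n.
Proof.
  induction n. reflexivity.
  rewrite seq_S, sumL_app, IHn. simpl. ring.
Qed.

Definition indj (M j : Z) (y : R) : R := if Z.eqb (Int_part y mod M) j then 1 else 0.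

Theorem oneD th1 (mn : nat) : (2 <= mn)%nat ->
  (forall p q : Z, q <> 0%Z -> th1 <> IZR p / IZR q) ->
  forall eps, eps > 0 -> exists N, forall c L j, (N <= L)%nat -> (0 <= j < Z.of_nat mn)%Z ->
    Rabs (sumL (fun x => indj (Z.of_nat mn) j (c + INR x * th1)) (seq 1 L) - INR L / INR mn) <= eps * INR L.
Proof.
  intros Hm Hirr eps Heps.
  assert (Hmr : 2 <= INR mn) by (apply (le_INR 2); auto).
  set (w := 1 / INR mn). set (beta := th1 / INR mn).
  assert (Hw : INR mn * w = 1) by (unfold w; field; lra).
  assert (Hirr' : forall q : nat, (1 <= q)%nat -> forall P : Z, INR q * beta <> IZR P).
  { intros q Hq P E. apply (Hirr (P * Z.of_nat mn)%Z (Z.of_nat q) ltac:(lia)).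
    rewrite mult_IZR, <- !INR_IZR_INZ, <- E. unfold beta.
    assert (1 <= INR q) by (apply (le_INR 1); auto). field; lra. }
  destruct (lower_bound beta w mn ltac:(lia) Hw Hirr' (eps / INR mn)) as [N HN].
  { apply Rdiv_lt_0_compat; lra. }
  exists N. intros c L j HL Hj.
  set (g0 := c / INR mn).
  assert (Hcnt : forall j', (j' < mn)%nat ->
     sumL (fun x => indj (Z.of_nat mn) (Z.of_nat j') (c + INR x * th1)) (seq 1 L) = Afun beta w (g0 - INR j' * w) L).
  { intros j' Hj'. rewrite sumL_seq. unfold Afun. apply sum0_ext. intros i _.
    unfold indj, ilt. simpl (1 + i)%nat.
    destruct (Z.eqb_spec (Int_part (c + INR (S i) * th1) mod Z.of_nat mn) (Z.of_nat j')) as [E|E].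
    - apply mod_shift in E; [|lia|lia].
      rewrite <- (Z.add_opp_r), <- fl_shiftZ, opp_IZR, <- INR_IZR_INZ in E.
      apply floor_mod0 in E; [|lia].
      destruct Rlt_dec as [|Hn]; auto. exfalso. apply Hn.
      replace (INR (S i) * beta + (g0 - INR j' * w)) with ((c + INR (S i) * th1 + - INR j') / INR mn).
      + exact E.
      + unfold beta, g0, w. field. lra.
    - destruct Rlt_dec as [Hl|]; auto. exfalso. apply E.
      apply mod_shift; [lia|lia|].
      rewrite <- (Z.add_opp_r), <- fl_shiftZ, opp_IZR, <- INR_IZR_INZ.
      apply floor_mod0; [lia|].
      replace ((c + INR (S i) * th1 + - INR j') / INR mn) with (INR (S i) * beta + (g0 - INR j' * w)).
      + exact Hl.
      + unfold beta, g0, w. field. lra. }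
  assert (Hsum : sum0 (fun j' => Afun beta w (g0 - INR j' * w) L) mn = INR L).
  { unfold Afun. rewrite sum0_swap. rewrite <- (Rmult_1_r (INR L)), <- sum0_const.
    apply sum0_ext. intros i _. rewrite <- (partition_m (INR (S i) * beta + g0) mn w) by (unfold w; auto; apply Rdiv_lt_0_compat; lra).
    apply sum0_ext. intros j' _. f_equal. f_equal. ring. }
  set (j' := Z.to_nat j).
  assert (Hj' : j = Z.of_nat j') by (unfold j'; lia).
  rewrite Hj', Hcnt by lia.
  assert (Hlow : forall k, (k < mn)%nat -> Afun beta w (g0 - INR k * w) L >= (w - eps / INR mn) * INR L).
  { intros; apply HN; auto. }
  assert (Hup : Afun beta w (g0 - INR j' * w) L - (w - eps / INR mn) * INR L <=
                sum0 (fun k => Afun beta w (g0 - INR k * w) L - (w - eps / INR mn) * INR L) mn).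
  { apply (sum0_ge_term (fun k => Afun beta w (g0 - INR k * w) L - (w - eps / INR mn) * INR L)); [|lia].
    intros k Hk. pose proof (Hlow k Hk). lra. }
  rewrite (sum0_add (fun k => Afun beta w (g0 - INR k * w) L) (fun _ => - ((w - eps / INR mn) * INR L))) in Hup.
  rewrite Hsum, sum0_const in Hup.
  pose proof (Hlow j' ltac:(lia)).
  assert (E1 : INR L / INR mn = w * INR L) by (unfold w; field; lra).
  assert (E2 : INR mn * (- ((w - eps / INR mn) * INR L)) = - INR L + eps * INR L) by (unfold w; field; lra).
  assert (E3 : (w - eps / INR mn) * INR L = w * INR L - eps / INR mn * INR L) by ring.
  assert (0 <= eps / INR mn * INR L <= eps * INR L).
  { split. apply Rmult_le_pos; [apply Rlt_le, Rdiv_lt_0_compat; lra | apply pos_INR].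
    apply Rmult_le_compat_r; [apply pos_INR|]. unfold Rdiv.
    replace eps with (eps * 1) at 2 by ring. apply Rmult_le_compat_l; [lra|].
    rewrite <- Rinv_1. apply Rinv_le_contravar; lra. }
  apply Rabs_le. lra.
Qed.

Lemma lin_comb_app th i w x : lin_comb th i (w ++ x :: nil) = lin_comb th i w + INR x * th (i + length w)%nat.
Proof.
  revert i; induction w as [|a w IH]; intros i; simpl.
  - rewrite Nat.add_0_r; ring.
  - rewrite IH. replace (S i + length w)%nat with (i + S (length w))%nat by lia. ring.
Qed.

Lemma box_len n V w : In w (box n V) -> length w = n.
Proof.
  revert w; induction n; simpl; intros w H.
  - destruct H as [H|[]]; subst; reflexivity.
  - apply in_flat_map in H. destruct H as [u [Hu H]]. apply in_map_iff in H. destruct H as [x [E _]].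
    subst. rewrite length_app, (IHn u Hu). simpl. lia.
Qed.

Lemma len_filter {A} (p : A -> bool) l : INR (length (filter p l)) = sumL (fun a => if p a then 1 else 0) l.
Proof. induction l; simpl. reflexivity. destruct (p a); simpl length; rewrite ?S_INR, IHl; ring. Qed.

Lemma sumL_flat_map {A B} (f : B -> R) (g : A -> list B) l : sumL f (flat_map g l) = sumL (fun a => sumL f (g a)) l.
Proof. induction l; simpl. reflexivity. rewrite sumL_app, IHl; reflexivity. Qed.

Lemma sumL_map {A B} (f : B -> R) (h : A -> B) l : sumL f (map h l) = sumL (fun a => f (h a)) l.
Proof. induction l; simpl. reflexivity. rewrite IHl; reflexivity. Qed.

Lemma sumL_ext {A} (f g : A -> R) l : (forall a, In a l -> f a = g a) -> sumL f l = sumL g l.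
Proof. induction l; simpl; intros H. reflexivity. rewrite H, IHl; auto. Qed.

Lemma sumL_add {A} (f g : A -> R) l : sumL (fun a => f a + g a) l = sumL f l + sumL g l.
Proof. induction l; simpl. ring. rewrite IHl; ring. Qed.

Lemma sumL_swap {A B} (F : A -> B -> R) l1 l2 :
  sumL (fun a => sumL (fun b => F a b) l2) l1 = sumL (fun b => sumL (fun a => F a b) l1) l2.
Proof.
  induction l1; simpl.
  - induction l2; simpl; [reflexivity| rewrite <- IHl2; ring].
  - rewrite IHl1, <- sumL_add. reflexivity.
Qed.

Lemma sumL_approx {A} (f : A -> R) l b d : (forall a, In a l -> Rabs (f a - b) <= d) ->
  Rabs (sumL f l - INR (length l) * b) <= INR (length l) * d.
Proof.
  induction l; cbn [sumL length]; intros H.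
  - simpl INR. rewrite Rmult_0_l, Rminus_0_r, Rabs_R0; lra.
  - rewrite S_INR. pose proof (H a (or_introl eq_refl)).
    pose proof (IHl (fun x Hx => H x (or_intror Hx))).
    replace (f a + sumL f l - (INR (length l) + 1) * b) with ((f a - b) + (sumL f l - INR (length l) * b)) by ring.
    eapply Rle_trans; [apply Rabs_triang|]. lra.
Qed.

Definition cnt th M j n V c : R :=
  INR (length (filter (fun v => Z.eqb (Int_part (lin_comb th 1 v + c) mod M) j) (box n V))).

Lemma cnt_S th M j k V c :
  cnt th M j (S k) V c = sumL (fun x => cnt th M j k V (c + INR x * th (S k))) (seq 1 (V (S k))).
Proof.
  unfold cnt. rewrite len_filter. simpl box. rewrite sumL_flat_map.
  rewrite (sumL_ext _ (fun u => sumL (fun x => if Z.eqb (Int_part (lin_comb th 1 u + (c + INR x * th (S k))) mod M) j then 1 else 0) (seq 1 (V (S k)))) (box k V)).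
  - rewrite sumL_swap. apply sumL_ext. intros x _. rewrite len_filter. reflexivity.
  - intros u Hu. rewrite sumL_map. apply sumL_ext. intros x _.
    rewrite lin_comb_app, (box_len k V u Hu).
    replace (lin_comb th 1 u + INR x * th (1 + k)%nat + c) with (lin_comb th 1 u + (c + INR x * th (S k))) by (simpl; ring).
    reflexivity.
Qed.

Lemma cnt_0 th M j V c : cnt th M j 0 V c = indj M j (0 + c).
Proof. unfold cnt, indj. simpl. destruct (Z.eqb _ j); simpl; reflexivity. Qed.

Definition prodV n V : nat := fold_right Nat.mul 1%nat (map V (seq 1 n)).

Lemma fold_mul c l : fold_right Nat.mul c l = (fold_right Nat.mul 1%nat l * c)%nat.
Proof. induction l; simpl. lia. rewrite IHl. lia. Qed.

Lemma prodV_S n V : prodV (S n) V = (prodV n V * V (S n))%nat.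
Proof. unfold prodV. rewrite seq_S, map_app, fold_right_app. simpl. rewrite fold_mul. replace (1 + n)%nat with (S n) by lia. lia. Qed.

Lemma prodV_pos n V : (forall i, (1 <= i <= n)%nat -> (1 <= V i)%nat) -> (1 <= prodV n V)%nat.
Proof.
  induction n; intros H. unfold prodV; simpl; lia.
  rewrite prodV_S. pose proof (IHn (fun i Hi => H i ltac:(lia))). pose proof (H (S n) ltac:(lia)). nia.
Qed.

Theorem claim th (mn : nat) : (2 <= mn)%nat ->
  (forall p q : Z, q <> 0%Z -> th 1%nat <> IZR p / IZR q) ->
  forall n, (1 <= n)%nat -> forall eps, eps > 0 -> exists N, forall c V j,
    (forall i, (1 <= i <= n)%nat -> (N <= V i)%nat) -> (0 <= j < Z.of_nat mn)%Z ->
    Rabs (cnt th (Z.of_nat mn) j n V c - INR (prodV n V) / INR mn) <= eps * INR (prodV n V).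
Proof.
  intros Hm Hirr n Hn eps Heps.
  assert (Hmr : 2 <= INR mn) by (apply (le_INR 2); auto).
  induction n as [|k IH]; [lia|].
  destruct (oneD (th 1%nat) mn Hm Hirr eps Heps) as [N1 HN1].
  destruct k as [|k].
  - exists N1. intros c V j HV Hj.
    rewrite cnt_S. unfold prodV; simpl. rewrite Nat.mul_1_r.
    rewrite (sumL_ext _ (fun x => indj (Z.of_nat mn) j (c + INR x * th 1%nat))).
    + apply HN1; auto.
    + intros x _. rewrite cnt_0, Rplus_0_l. reflexivity.
  - destruct (IH ltac:(lia)) as [N HN].
    exists N. intros c V j HV Hj.
    rewrite cnt_S, prodV_S.
    pose proof (sumL_approx (fun x => cnt th (Z.of_nat mn) j (S k) V (c + INR x * th (S (S k))))
                 (seq 1 (V (S (S k)))) (INR (prodV (S k) V) / INR mn) (eps * INR (prodV (S k) V))) as H.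
    rewrite length_seq in H.
    rewrite mult_INR.
    replace (INR (prodV (S k) V) * INR (V (S (S k))) / INR mn) with (INR (V (S (S k))) * (INR (prodV (S k) V) / INR mn)) by (field; lra).
    replace (eps * (INR (prodV (S k) V) * INR (V (S (S k))))) with (INR (V (S (S k))) * (eps * INR (prodV (S k) V))) by ring.
    apply H. intros x _. apply HN; auto. intros i Hi; apply HV; lia.
Qed.
Theorem proposition6p4 (n : nat) (theta : nat -> R) (m : Z) :
  (1 <= n)%nat -> irrational (theta 1%nat) -> (2 <= m)%Z ->
  unif_distr_mod n (floor_array theta) m.
Proof.
  intros Hn Hirr Hm j Hj eps Heps.
  set (mn := Z.to_nat m).
  assert (Em : m = Z.of_nat mn) by (unfold mn; lia).
  assert (Hmn : (2 <= mn)%nat) by lia.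
  assert (Hmr : 2 <= INR mn) by (apply (le_INR 2); auto).
  destruct (claim theta mn Hmn Hirr n Hn (eps / 2) ltac:(lra)) as [N HN].
  exists (Nat.max N 1). intros V HV.
  assert (HP : (1 <= prodV n V)%nat) by (apply prodV_pos; intros i Hi; specialize (HV i Hi); lia).
  assert (HPr : 1 <= INR (prodV n V)) by (apply (le_INR 1); auto).
  pose proof (HN (theta 0%nat) V j ltac:(intros i Hi; specialize (HV i Hi); lia) ltac:(lia)) as H.
  rewrite <- Em in H.
  change (INR (count_res (floor_array theta) m j n V)) with (cnt theta m j n V (theta 0%nat)).
  change (fold_right Nat.mul 1%nat (map V (seq 1 n))) with (prodV n V).
  rewrite Em, <- INR_IZR_INZ, <- Em.
  set (c := cnt theta m j n V (theta 0%nat)) in *.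
  set (P := INR (prodV n V)) in *.
  replace (c / P - 1 / INR mn) with ((c - P / INR mn) / P) by (field; lra).
  unfold Rdiv at 1. rewrite Rabs_mult, Rabs_inv, (Rabs_pos_eq P) by lra.
  apply (Rmult_lt_reg_r P); [lra|]. rewrite Rmult_assoc, Rinv_l, Rmult_1_r by lra.
  nra.
Qed.
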